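(* Let $n$ be a positive odd integer and let $a$ be any integer. Let $q\neq 1$ be a positive real number, and define the $n\times n$ matrix $$Q=\left[q^{-\{\frac{aj-(a+1)k}{n}\}}\right]_{1\leqslant j,k\leqslant n}.$$ Then $$\det(Q)=\left(\frac{a(a+1)}{n}\right)(1-q^{-1})^{n-1}.$$ Moreover, when $\gcd(a(a+1),n)=1$, $$Q^{-1}=\frac{1}{1-q^{-1}}[f(j,k)]_{1\leqslant j,k\leqslant n},$$ where $$f(j,k)=[\![\,n\mid(a+1)j-ak\,]\!]-q^{-1/n}[\![\,n\mid (a+1)j-ak-1\,]\!].$$
   Context: For a real number $x$, $\{x\}=x-\lfloor x\rfloor$ is its fractional part. For a statement $S$, $[\![S]\!]$ equals $1$ if $S$ holds and $0$ otherwise. $q^{-1/n}$ denotes the positive real $n$th root of $q^{-1}$. $\left(\frac{\cdot}{n}\right)$ denotes the Jacobi symbol modulo the positive odd integer $n$ (equal to $0$ when the argument is not coprime to $n$, and $\left(\frac{\cdot}{1}\right)=1$). *)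

(* Defs.v *)
From HB Require Import structures.
From mathcomp Require Import all_boot all_order all_algebra.
From mathcomp Require Import all_classical all_reals all_analysis.
Set Implicit Arguments. Unset Strict Implicit. Unset Printing Implicit Defensive.
Import Order.TTheory GRing.Theory Num.Theory.
Local Open Scope ring_scope.

Definition fracpart (R : realType) (x : R) : R := x - (Num.floor x)%:~R.

Definition legendre (m : int) (p : nat) : int :=
  if (p%:Z %| m)%Z then 0
  else if [exists x : 'I_p, ((x%:Z) ^+ 2 == m %[mod p%:Z])%Z] then 1 else -1.

Definition jacobi (m : int) (n : nat) : int :=
  \prod_(p <- primes n) legendre m p ^+ logn p n.

(* The matrix Q, indices j,k in 1..n represented by i : 'I_n as i+1. *)
Definition Qmat (R : realType) (n : nat) (a : int) (q : R) : 'M[R]_n :=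
  \matrix_(j < n, k < n)
    q `^ (- fracpart (((a * (j.+1)%:Z - (a + 1) * (k.+1)%:Z)%:~R : R) / n%:R)).

Definition fmat (R : realType) (n : nat) (a : int) (q : R) : 'M[R]_n :=
  \matrix_(j < n, k < n)
    (((n%:Z %| (a + 1) * (j.+1)%:Z - a * (k.+1)%:Z)%Z)%:R
     - q `^ (- (n%:R)^-1) *
       ((n%:Z %| (a + 1) * (j.+1)%:Z - a * (k.+1)%:Z - 1)%Z)%:R).

(* Main.v *)
Require Import Defs.
From HB Require Import structures.
From mathcomp Require Import all_boot all_order all_algebra.
From mathcomp Require Import all_classical all_reals all_analysis.
From mathcomp Require Import perm fingroup finalg finfield.
From mathcomp Require Import zify ring.
Import Order.TTheory GRing.Theory Num.Theory.
Set Implicit Arguments. Unset Strict Implicit. Unset Printing Implicit Defensive.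
Local Open Scope ring_scope.
Section Ext.
Variables (A T : finType) (h : A -> T).
Hypothesis hinj : injective h.
Local Open Scope group_scope.

Definition ext_fun (s : {perm A}) (t : T) : T :=
  if [pick a | h a == t] is Some a then h (s a) else t.

Lemma ext_funE s a : ext_fun s (h a) = h (s a).
Proof.
rewrite /ext_fun; case: pickP => [a' /eqP/hinj -> //|/(_ a)]; by rewrite eqxx.
Qed.

Lemma ext_funO s t : (forall a, h a != t) -> ext_fun s t = t.
Proof.
move=> Ht; rewrite /ext_fun; case: pickP => [a' /eqP Ha|//].
by move: (Ht a'); rewrite Ha eqxx.
Qed.

Lemma ext_caseP t : {a | t = h a} + {forall a, h a != t}.
Proof.
case: (pickP (fun a => h a == t)) => [a /eqP <-|H]; first by left; exists a.
by right => a; rewrite H.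
Qed.

Lemma ext_inj s : injective (ext_fun s).
Proof.
move=> t1 t2.
case: (ext_caseP t1) => [[a1 ->]|H1]; case: (ext_caseP t2) => [[a2 ->]|H2].
- by rewrite !ext_funE => /hinj/perm_inj ->.
- by rewrite ext_funE (ext_funO _ H2) => E; move: (H2 (s a1)); rewrite E eqxx.
- by rewrite ext_funE (ext_funO _ H1) => E; move: (H1 (s a2)); rewrite E eqxx.
- by rewrite (ext_funO _ H1) (ext_funO _ H2).
Qed.

Definition ext s : {perm T} := perm (@ext_inj s).

Lemma extE s a : ext s (h a) = h (s a).
Proof. by rewrite permE ext_funE. Qed.

Lemma extO s t : (forall a, h a != t) -> ext s t = t.
Proof. by move=> H; rewrite permE ext_funO. Qed.

Lemma extM s1 s2 : ext (s1 * s2) = ext s1 * ext s2.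
Proof.
apply/permP => t; rewrite permM.
case: (ext_caseP t) => [[a ->]|H]; first by rewrite !extE permM.
by rewrite !extO.
Qed.

Lemma ext1 : ext 1 = 1.
Proof.
apply/permP => t; rewrite perm1.
case: (ext_caseP t) => [[a ->]|H]; first by rewrite !extE perm1.
by rewrite !extO.
Qed.

Lemma ext_tperm x y : ext (tperm x y) = tperm (h x) (h y).
Proof.
apply/permP => t.
case: (ext_caseP t) => [[a ->]|H]; last first.
  by rewrite extO // tpermD // eq_sym.
rewrite extE; case: (tpermP x y a) => [->|->|/eqP ax /eqP ay].
- by rewrite tpermL.
- by rewrite tpermR.
by rewrite tpermD // (inj_eq hinj) eq_sym.
Qed.

Lemma odd_ext s : odd_perm (ext s) = odd_perm s.
Proof.
case: (prod_tpermP s) => ts -> dts.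
rewrite (big_morph ext extM ext1).
rewrite (eq_bigr (fun t => tperm (h t.1) (h t.2))); last by move=> t _; rewrite ext_tperm.
rewrite -(big_map (fun t => (h t.1, h t.2)) xpredT (fun t => tperm t.1 t.2)).
rewrite !odd_perm_prod ?size_map //.
by rewrite all_map; apply: sub_all dts => t /=; rewrite /dpair /= (inj_eq hinj).
Qed.
End Ext.
Section Fib.
Local Open Scope group_scope.
Variables (A B : finType).

Definition fib_fun (t : A -> {perm B}) (w : A * B) : A * B := (w.1, t w.1 w.2).
Lemma fib_inj t : injective (fib_fun t).
Proof. by move=> [u v] [u' v'] [] /= <- /perm_inj ->. Qed.
Definition fibperm t : {perm A * B} := perm (@fib_inj t).

Lemma fibpermE t u v : fibperm t (u, v) = (u, t u v).
Proof. by rewrite permE. Qed.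

Lemma big_addb_const (I : Type) (s : seq I) b :
  \big[addb/false]_(i <- s) b = odd (size s) && b.
Proof.
elim: s => [|x s IH]; first by rewrite big_nil.
by rewrite big_cons IH /=; clear IH; case: b; case: (odd _).
Qed.

Lemma odd_fibperm (t : A -> {perm B}) b :
  (forall u, odd_perm (t u) = b) -> odd_perm (fibperm t) = odd #|A| && b.
Proof.
move=> Hb.
have hinj (u : A) : injective (fun v : B => (u, v)) by move=> v1 v2 [].
pose pi u := ext (hinj u) (t u).
have key s : uniq s -> forall w, (\prod_(u <- s) pi u) w =
    if w.1 \in s then (w.1, t w.1 w.2) else w.
  elim: s => [_ w|u0 s IH /andP[u0s us] [u v]] /=.
    by rewrite big_nil perm1.
  rewrite big_cons permM in_cons /=.
  have [->|neu] := eqVneq u u0.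
    rewrite /pi (extE (hinj u0)) IH //= (negPf u0s) //.
  rewrite /pi extO; last by move=> v'; apply/eqP => -[] E; move: neu; rewrite E eqxx.
  by rewrite IH.
have -> : fibperm t = \prod_(u <- enum A) pi u.
  apply/permP => -[u v]; rewrite key ?enum_uniq // fibpermE /= mem_enum //.
rewrite (big_morph (@odd_perm _) (@odd_permM _) (odd_perm1 _)).
rewrite (eq_bigr (fun _ => b)); last by move=> u _; rewrite odd_ext Hb.
by rewrite big_addb_const cardE.
Qed.

End Fib.

Section Prod.
Local Open Scope group_scope.
Variables (A B : finType).

Definition prod_fun (s : {perm A}) (w : A * B) : A * B := (s w.1, w.2).
Lemma prod_inj s : injective (prod_fun s).
Proof. by move=> [u v] [u' v'] [] /= /perm_inj -> ->. Qed.
Definition prodperm s : {perm A * B} := perm (@prod_inj s).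

Lemma prodpermE s u v : prodperm s (u, v) = (s u, v).
Proof. by rewrite permE. Qed.

Lemma odd_prodperm s : odd_perm (prodperm s) = odd #|B| && odd_perm s.
Proof.
have hinj : injective (fun w : A * B => (w.2, w.1)) by move=> [u v] [u' v'] [] -> ->.
have E : ext hinj (prodperm s) = fibperm (fun _ : B => s).
  apply/permP => -[v u].
  by have := extE hinj (prodperm s) (u, v); rewrite /= => ->; rewrite prodpermE fibpermE.
by rewrite -(odd_ext hinj) E (odd_fibperm (b := odd_perm s)).
Qed.
End Prod.
Section Zn.
Local Open Scope nat_scope.

Lemma ord_gt0 n (i : 'I_n) : 0 < n.
Proof. exact: leq_ltn_trans (leq0n i) (ltn_ord i). Qed.

Lemma coprime_mod_cancel n c i j : coprime c n -> i < n -> j < n ->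
  (c * i) %% n = (c * j) %% n -> i = j.
Proof.
move=> cop lti ltj.
wlog le : i j lti ltj / i <= j.
  move=> H E; case: (leqP i j) => [|/ltnW] h; first exact: H.
  by apply/esym/H.
move=> E; have : (c * j == c * i %[mod n]) by rewrite E.
rewrite (eqn_mod_dvd n (leq_mul (leqnn c) le)) -mulnBr.
rewrite Gauss_dvdr; last by rewrite coprime_sym.
move=> d; case: (posnP (j - i)) => [z|pos]; first lia.
by have := dvdn_leq pos d; lia.
Qed.

Definition mulf n c (i : 'I_n) : 'I_n :=
  if coprime c n then Ordinal (ltn_pmod (c * i) (ord_gt0 i)) else i.

Lemma mulf_inj n c : injective (@mulf n c).
Proof.
move=> i j; rewrite /mulf; case: ifP => // cop [] E; apply: ord_inj => /=.
exact: (coprime_mod_cancel cop (ltn_ord i) (ltn_ord j) E).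
Qed.

Definition mperm n c : {perm 'I_n} := perm (@mulf_inj n c).

Lemma mpermE n c (i : 'I_n) : coprime c n -> (mperm n c i : nat) = (c * i) %% n.
Proof. by move=> cop; rewrite permE /mulf cop. Qed.

Definition shf n (i : 'I_n) : 'I_n := Ordinal (ltn_pmod i.+1 (ord_gt0 i)).

Lemma modS_small x n : x < n -> x.+1 %% n = (if x.+1 == n then 0 else x.+1).
Proof.
move=> lt; case: eqP => [->|ne]; first by rewrite modnn.
rewrite modn_small //; lia.
Qed.

Lemma shf_inj n : injective (@shf n).
Proof.
move=> i j [] E; apply: ord_inj => /=.
move: E; rewrite !modS_small //.
case: eqP; case: eqP; move=> *; lia.
Qed.

Definition shperm n : {perm 'I_n} := perm (@shf_inj n).

Lemma shpermX n k (i : 'I_n) : ((shperm n ^+ k)%g i : nat) = (i + k) %% n.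
Proof.
elim: k => [|k IH]; first by rewrite expg0 perm1 addn0 modn_small.
by rewrite expgSr permM permE /= IH addnS -addn1 modnDml addn1.
Qed.

Lemma odd_permX (T : finType) (s : {perm T}) k :
  odd_perm (s ^+ k)%g = odd k && odd_perm s.
Proof.
elim: k => [|k IH]; first by rewrite expg0 odd_perm1.
by rewrite expgS odd_permM IH /=; case: (odd_perm s); case: (odd k).
Qed.

Lemma odd_shperm n : odd n -> odd_perm (shperm n) = false.
Proof.
move=> on.
have n0 : 0 < n by case: n on.
pose i0 : 'I_n := Ordinal n0.
rewrite /odd_perm.
have -> : porbits (shperm n) = [set porbit (shperm n) i0].
  apply/setP => X; rewrite inE; apply/imsetP/eqP => [[x _ ->]|->]; last by exists i0.
  apply/eqP; rewrite eq_porbit_mem; apply/porbitP; exists x.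
  by apply: ord_inj; rewrite shpermX /= add0n modn_small.
by rewrite cards1 card_ord on.
Qed.

Lemma mpermM n b c : coprime b n -> coprime c n ->
  mperm n (b * c) = (mperm n c * mperm n b)%g.
Proof.
move=> cb cc; have cbc : coprime (b * c) n by rewrite coprimeMl cb cc.
apply/permP => i; apply: ord_inj; rewrite permM !mpermE // modnMmr mulnA //.
Qed.
End Zn.
Section PrimeCase.
Variable p : nat.
Hypothesis pr : prime p.
Hypothesis op : odd p.
Local Notation F := 'F_p.

Definition fmulf (c : F) (x : F) : F := if c == 0 then x else c * x.
Lemma fmulf_inj c : injective (fmulf c).
Proof.
move=> x y; rewrite /fmulf; case: eqP => // /eqP c0; exact: mulfI.
Qed.
Definition fmul c : {perm F} := perm (@fmulf_inj c).

Lemma fmulE c x : c != 0 -> fmul c x = c * x.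
Proof. by move=> c0; rewrite permE /fmulf (negPf c0). Qed.

Lemma fmulX c k : c != 0 -> fmul (c ^+ k) = (fmul c ^+ k)%g.
Proof.
move=> c0; elim: k => [|k IH].
  by apply/permP => x; rewrite expg0 perm1 permE /fmulf expr0 oner_eq0 mul1r.
apply/permP => x; rewrite expgSr permM -IH !fmulE ?expf_neq0 //.
by rewrite exprS mulrA.
Qed.

Lemma cardF : #|F| = p. Proof. exact: card_Fp. Qed.

Lemma F_unity (x : F) : x != 0 -> x ^+ p.-1 = 1.
Proof.
move=> x0; have := expf_card x; rewrite cardF.
have -> : x ^+ p = x ^+ p.-1 * x by rewrite -exprSr prednK // prime_gt0.
by rewrite -{3}[x]mul1r => H; apply: (mulIf x0 H).
Qed.

Lemma F_prim : exists z : F, (p.-1).-primitive_root z.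
Proof.
pose rs := [seq x <- enum F | x != 0].
have p1 : (0 < p.-1)%N by case: p pr op => [|[|[|]]].
have : has (p.-1).-primitive_root rs; last by case/hasP => z _ pz; exists z.
apply: (cyclic.has_prim_root p1).
- apply/allP => x; rewrite mem_filter => /andP[x0 _].
  by rewrite unity_rootE F_unity.
- by rewrite filter_uniq ?enum_uniq.
- rewrite size_filter.
  have := count_predC (fun x : F => x != 0) (enum F).
  have -> : count (predC (fun x : F => x != 0)) (enum F) = count_mem (0 : F) (enum F).
    by apply: eq_count => x /=; rewrite negbK eq_sym.
  rewrite count_uniq_mem ?enum_uniq // mem_enum -cardT cardF => E.
  have : (0 : F) \in F by [].
  move=> H; rewrite H addn1 in E.
  apply/eq_leq/succn_inj; rewrite prednK ?prime_gt0 //; exact: (esym E).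
Qed.

Lemma F_gen z (c : F) : (p.-1).-primitive_root z -> c != 0 -> exists k, c = z ^+ k.
Proof.
move=> pz c0; have [i ->] := prim_rootP pz (F_unity c0); by exists i.
Qed.

Lemma odd_fmul_prim z : (p.-1).-primitive_root z -> odd_perm (fmul z).
Proof.
move=> pz.
have z0 : z != 0 by rewrite (prim_root_eq0 pz); case: p pr op => [|[|[|]]].
rewrite /odd_perm cardF op.
set s := fmul z.
have P0 : forall i, (s ^+ i)%g 0 = 0.
  by move=> i; rewrite -fmulX // fmulE ?expf_neq0 // mulr0.
have -> : porbits s = [set porbit s 0; porbit s 1].
  apply/setP => X; rewrite !inE; apply/imsetP/orP => [[x _ ->]|].
    have [->|x0] := eqVneq x 0; first by left.
    right; rewrite eq_porbit_mem; apply/porbitP.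
    have [k ->] := F_gen pz x0; exists k.
    by rewrite -fmulX // fmulE ?expf_neq0 // mulr1.
  by case=> /eqP ->; [exists 0 | exists 1].
rewrite cards2.
suff -> : (porbit s 0 != porbit s 1) by [].
apply/negP => /eqP E.
have : (1 : F) \in porbit s 0 by rewrite E porbit_id.
by case/porbitP => i; rewrite P0 => /eqP; rewrite oner_eq0.
Qed.

Lemma odd_fmulX z k : (p.-1).-primitive_root z -> odd_perm (fmul (z ^+ k)) = odd k.
Proof.
move=> pz; have z0 : z != 0 by rewrite (prim_root_eq0 pz); case: p pr op => [|[|[|]]].
by rewrite fmulX // odd_permX odd_fmul_prim // andbT.
Qed.
End PrimeCase.
Section PrimeCase2.
Variable p : nat.
Hypothesis pr : prime p.
Hypothesis op : odd p.
Local Notation F := 'F_p.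

Lemma pm1_neq0 : (p.-1 != 0)%N.
Proof. by case: p pr op => [|[|[|]]]. Qed.

Lemma pm1_even : odd p.-1 = false.
Proof. by move: op; rewrite -{1}(prednK (prime_gt0 pr)) /= => /negPf. Qed.

Lemma Fp_lt (y : F) : (y < p)%N.
Proof. by apply: leq_trans (ltn_ord y) _; rewrite Fp_cast. Qed.

Lemma Fp_natr (y : F) : ((y : nat)%:R : F) = y.
Proof. exact: natr_Zp. Qed.

Lemma sq_in_F z k : (p.-1).-primitive_root z ->
  [exists y : F, y ^+ 2 == z ^+ k] = ~~ odd k.
Proof.
move=> pz; have z0 : z != 0 by rewrite (prim_root_eq0 pz); exact: pm1_neq0.
apply/existsP/idP => [[y /eqP Hy]|ek].
  have y0 : y != 0.
    by apply/negP => /eqP y0; move: Hy; rewrite y0 expr0n /= => /esym/eqP; rewrite expf_eq0 (negPf z0) andbF.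
  have [j Ej] := F_gen pr pz y0.
  move: Hy; rewrite Ej -exprM => /eqP; rewrite (eq_prim_root_expr pz) => /eqP E.
  have ep := pm1_even.
  by rewrite -(odd_mod k ep) -E odd_mod // oddM andbF.
exists (z ^+ k./2); rewrite -exprM.
by have := odd_double_half k; rewrite (negPf ek) add0n -muln2 => ->.
Qed.

Lemma legendre_F (a : int) k z : (p.-1).-primitive_root z ->
  (a%:~R : F) = z ^+ k -> legendre a p = (-1) ^+ odd k.
Proof.
move=> pz Ea; have z0 : z != 0 by rewrite (prim_root_eq0 pz); exact: pm1_neq0.
rewrite /legendre (dvdz_pcharf (pchar_Fp pr)) Ea expf_eq0 (negPf z0) andbF.
have -> : [exists x : 'I_p, ((x%:Z) ^+ 2 == a %[mod p%:Z])%Z] =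
          [exists y : F, y ^+ 2 == z ^+ k].
  apply/existsP/existsP => [[x Hx]|[y Hy]].
    exists (x%:R); move: Hx.
    by rewrite eqz_mod_dvd (dvdz_pcharf (pchar_Fp pr)) rmorphB /= rmorphXn /= Ea subr_eq0.
  exists (Ordinal (Fp_lt y)).
  have E : (((y : nat)%:Z)%:~R : F) = y by rewrite -{2}(Fp_natr y).
  by rewrite eqz_mod_dvd (dvdz_pcharf (pchar_Fp pr)) rmorphB /= rmorphXn /= Ea subr_eq0 /= E.
by rewrite sq_in_F //; case: (odd k).
Qed.

Lemma hF_inj : injective (fun i : 'I_p => (i : nat)%:R : F).
Proof.
move=> i j /(congr1 (@nat_of_ord _)); rewrite !val_Fp_nat // !modn_small //; exact: ord_inj.
Qed.

Lemma mperm_prime (a : nat) : coprime a p ->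
  legendre a p = (-1) ^+ odd_perm (mperm p a).
Proof.
move=> cop.
have [z pz] := F_prim pr op.
have a0 : (a%:R : F) != 0.
  by rewrite -(dvdn_pcharf (pchar_Fp pr)) -prime_coprime // coprime_sym.
have [k Ek] := F_gen pr pz a0.
rewrite (legendre_F (k := k) pz); last exact: Ek.
congr (_ ^+ _).
rewrite -(odd_ext hF_inj) -(odd_fmulX pr op k pz) -Ek.
congr odd_perm; apply/permP => t.
have -> : t = (Ordinal (Fp_lt t) : nat)%:R by rewrite Fp_natr.
rewrite (extE hF_inj (mperm p a) (Ordinal (Fp_lt t))) fmulE // mpermE //.
by rewrite Fp_nat_mod // natrM.
Qed.
End PrimeCase2.
Section Jacobi.

Lemma jacobiE (a : int) n N : (0 < n)%N -> (n < N)%N ->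
  jacobi a n = \prod_(0 <= q < N | prime q) legendre a q ^+ logn q n.
Proof.
move=> n0 nN; rewrite /jacobi -(filter_pi_of nN) big_filter.
rewrite [LHS]big_mkcond [RHS]big_mkcond; apply: eq_bigr => q _.
have -> : \pi(n) q = (q \in primes n) by [].
rewrite mem_primes n0 /=.
case pq: (prime q) => //=; case: ifP => // qn.
by rewrite (_ : logn q n = 0%N) ?expr0 //; apply/eqP; rewrite -leqn0 leqNgt logn_gt0 mem_primes pq n0 qn.
Qed.

Lemma jacobi1 (a : int) : jacobi a 1 = 1.
Proof. by rewrite /jacobi big_nil. Qed.

Lemma jacobi_mulp (a : int) m p : (0 < m)%N -> prime p ->
  jacobi a (m * p) = jacobi a m * legendre a p.
Proof.
move=> m0 pr; have p0 := prime_gt0 pr.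
have mp0 : (0 < m * p)%N by rewrite muln_gt0 m0.
pose N := (m * p).+1.
rewrite (jacobiE a mp0 (ltnSn _)) (jacobiE a (n := m) (N := N) m0); last first.
  by rewrite ltnS leq_pmulr.
rewrite (eq_bigr (fun q => legendre a q ^+ logn q m * legendre a q ^+ (q == p)))%R; last first.
  by move=> q _; rewrite lognM // exprD (logn_prime q pr).
rewrite big_split /=; congr (_ * _)%R.
rewrite big_mkcond /=.
rewrite (eq_bigr (fun q => if q == p then legendre a q else 1%R)); last first.
  move=> q _; case: eqP => [->|_]; first by rewrite pr expr1.
  by case: (prime q); rewrite ?expr0.
rewrite -big_mkcond big_nat1_eq /= ifT //.
by rewrite /N ltnS leq_pmull.
Qed.
End Jacobi.
Section Skew.
Local Open Scope nat_scope.

Lemma lt_mix m p u v : u < m -> v < p -> u + m * v < m * p.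
Proof.
move=> um vp; have : m * v.+1 <= m * p by rewrite leq_mul2l vp orbT.
rewrite mulnS; lia.
Qed.

Lemma skew_arith m p a u v : 0 < m -> 0 < p ->
  (a * (u + m * v)) %% (m * p) =
  (a * u) %% m + m * (((a * v) %% p + (a * u) %/ m) %% p).
Proof.
move=> m0 p0.
set X := (a * v) %% p + (a * u) %/ m.
have E : a * (u + m * v) =
   ((a * u) %% m + m * (X %% p)) + (X %/ p + (a * v) %/ p) * (m * p).
  have H1 := divn_eq (a * u) m; have H2 := divn_eq (a * v) p.
  have H3 := divn_eq X p.
  rewrite mulnDr mulnCA.
  move: H1 H2 H3; rewrite /X.
  move: ((a * u) %/ m) ((a * u) %% m) ((a * v) %/ p) ((a * v) %% p) => q1 r1 q2 r2.
  move: ((r2 + q1) %/ p) ((r2 + q1) %% p) => q3 r3.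
  move: (a * u) (a * v) => au av.
  move=> -> -> H3; nia.
rewrite E addnC modnMDl modn_small //.
apply: lt_mix; [exact: ltn_pmod | exact: ltn_pmod].
Qed.
End Skew.
Lemma odd_mperm_mul m p a : (0 < m)%N -> prime p -> odd p -> odd m ->
  coprime a (m * p) ->
  odd_perm (mperm (m * p) a) = odd_perm (mperm m a) (+) odd_perm (mperm p a).
Proof.
move=> m0 pr op om cop.
have p0 := prime_gt0 pr.
have cm : coprime a m by move: cop; rewrite coprimeMr => /andP[].
have cp : coprime a p by move: cop; rewrite coprimeMr => /andP[].
pose hh (w : 'I_m * 'I_p) : 'I_(m * p) := Ordinal (lt_mix (ltn_ord w.1) (ltn_ord w.2)).
have hh_inj : injective hh.
  move=> [u v] [u' v'] /(congr1 (@nat_of_ord _)) /= E.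
  have Eu : (u : nat) = u'.
    have := congr1 (modn^~ m) E; rewrite /= !(addnC u) !(addnC u') !(mulnC m).
    by rewrite !modnMDl !modn_small.
  have Ev : (v : nat) = v'.
    have := congr1 (divn^~ m) E; rewrite /= !(addnC u) !(addnC u') !(mulnC m).
    by rewrite !divnMDl // !divn_small // !addn0.
  by congr pair; apply: ord_inj.
pose tau (u : 'I_m) : {perm 'I_p} := (mperm p a * shperm p ^+ ((a * u) %/ m))%g.
pose pi1 := fibperm tau.
pose pi2 := @prodperm _ 'I_p (mperm m a).
have E : ext hh_inj (pi1 * pi2)%g = mperm (m * p) a.
  apply/permP => t.
  have tlt : (t %/ m < p)%N by rewrite ltn_divLR // [(p * m)%N]mulnC.
  have -> : t = hh (Ordinal (ltn_pmod t m0), Ordinal tlt).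
    by apply: ord_inj => /=; rewrite addnC [(m * (t %/ m))%N]mulnC -divn_eq.
  rewrite extE permM fibpermE prodpermE; apply: ord_inj => /=.
  rewrite mpermE // permM shpermX mpermE // mpermE //=.
  by rewrite skew_arith.
rewrite -E odd_ext odd_permM.
rewrite (odd_fibperm (b := odd_perm (mperm p a))); last first.
  by move=> u; rewrite odd_permM odd_permX odd_shperm // andbF addbF.
by rewrite odd_prodperm !card_ord om op /= addbC.
Qed.

Lemma zolotarev n (a : nat) : odd n -> coprime a n ->
  jacobi a n = (-1) ^+ odd_perm (mperm n a).
Proof.
elim/ltn_ind: n a => n IH a on cop.
have n0 : (0 < n)%N by case: n IH on cop.
case: (ltnP 1 n) => [n1|le1]; last first.
  have n1 : n = 1%N by apply/eqP; rewrite eqn_leq le1 n0.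
  subst n; rewrite jacobi1.
  have -> : mperm 1 a = 1%g by apply/permP => i; rewrite perm1 !ord1.
  by rewrite odd_perm1 expr0.
have pr := pdiv_prime n1.
have pdvd := pdiv_dvd n.
have op : odd (pdiv n).
  apply: contraLR on => ep; have : (2 %| n)%N.
    by apply: dvdn_trans pdvd; rewrite dvdn2.
  by rewrite dvdn2.
have m0 : (0 < n %/ pdiv n)%N by rewrite divn_gt0 ?prime_gt0 // dvdn_leq.
have mlt : (n %/ pdiv n < n)%N by rewrite ltn_Pdiv // prime_gt1.
have om : odd (n %/ pdiv n) by move: on; rewrite -{1}(divnK pdvd) oddM => /andP[].
have cm : coprime a (n %/ pdiv n) by apply: coprime_dvdr cop; apply: dvdn_div.
have cp : coprime a (pdiv n) by apply: coprime_dvdr cop.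
move: cop; rewrite -(divnK pdvd) => cop.
rewrite jacobi_mulp // odd_mperm_mul // signr_addb IH // mperm_prime //.
Qed.
Section Real1.
Variable R : realType.

Lemma modz_absE (z : int) (n : nat) : (0 < n)%N -> (`|(z %% n)%Z|%N : int) = (z %% n)%Z.
Proof. by move=> n0; rewrite gez0_abs // modz_ge0 // lt0n_neq0. Qed.

Lemma frac_pow (q : R) (n : nat) (z : int) : (0 < n)%N -> 0 < q ->
  q `^ (- fracpart ((z%:~R : R) / n%:R)) = (q `^ (- (n%:R)^-1)) ^+ `|(z %% n)%Z|%N.
Proof.
move=> n0 q0.
have nR : (n%:R : R) != 0 by rewrite pnatr_eq0 -lt0n.
have fr : fracpart ((z%:~R : R) / n%:R) = (`|(z %% n)%Z|%N)%:R / n%:R.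
  have zE : (z%:~R : R) = ((z %/ n)%Z)%:~R * n%:R + (`|(z %% n)%Z|%N)%:R.
    rewrite -[(`|_|%N)%:R]/(((`|(z %% n)%Z|%N : int))%:~R) modz_absE //.
    by rewrite {1}(divz_eq z n) rmorphD rmorphM /=.
  rewrite /fracpart.
  have fl : Num.floor ((z%:~R : R) / n%:R) = (z %/ n)%Z.
    apply: floor_def; rewrite zE mulrDl mulfK // lerDl divr_ge0 ?ler0n //=.
    rewrite rmorphD /= ltrD2l ltr_pdivrMr ?ltr0n // mul1r ltr_nat.
    rewrite -(ltz_nat) modz_absE //; exact: ltz_pmod.
  by rewrite fl zE mulrDl mulfK // addrC addKr.
rewrite fr -mulrN mulrC powRrM powR_mulrn //; exact: powR_ge0.
Qed.
End Real1.
Section Arith2.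
Local Open Scope nat_scope.

Lemma sub_mod (u w n : nat) : u < n -> w <= n ->
  (u + n - w) %% n = if w <= u then u - w else u + n - w.
Proof.
move=> un wn; case: leqP => h.
  by rewrite -addnBAC // modnDr modn_small //; lia.
by rewrite modn_small //; lia.
Qed.

Lemma key_exp1 u w n : u < n -> w < n -> u != w ->
  (u + n - w) %% n = ((u + n - w.+1 %% n) %% n).+1.
Proof.
move=> un wn /eqP uw; rewrite modS_small //.
case: eqP => e.
  rewrite subn0 modnDr (modn_small un) sub_mod //; try lia.
  case: leqP => h; lia.
rewrite sub_mod //; try lia.
rewrite sub_mod //; try lia.
by case: leqP => h1; case: leqP => h2; lia.
Qed.

Lemma key_exp2 w n : w < n -> ((w + n - w.+1 %% n) %% n).+1 = n.
Proof.
move=> wn; rewrite modS_small //.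
case: eqP => e.
  by rewrite subn0 modnDr (modn_small wn).
rewrite sub_mod //; try lia.
case: leqP => h; lia.
Qed.

Lemma key_exp3 w n : w < n -> (w + n - w) %% n = 0.
Proof. by move=> wn; rewrite addnC addnK modnn. Qed.

Lemma key_exp4 u w n : 0 < u -> u < n -> w < n -> u != w ->
  (u + n - w) %% n = ((u.-1 + n - w) %% n).+1.
Proof.
move=> u0 un wn /eqP uw.
rewrite sub_mod //; try lia.
rewrite sub_mod //; try lia.
by case: leqP => h1; case: leqP => h2; lia.
Qed.

Lemma key_exp5 w n : 0 < w -> w < n -> ((w.-1 + n - w) %% n).+1 = n.
Proof.
move=> w0 wn; rewrite sub_mod //; try lia.
case: leqP => h; lia.
Qed.
End Arith2.

Section Real2.
Variable R : realType.

Lemma key_diff (x : R) n (u w : nat) : (u < n)%N -> (w < n)%N ->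
  x ^+ ((u + n - w) %% n) - x * x ^+ ((u + n - w.+1 %% n) %% n)
  = if u == w then 1 - x ^+ n else 0.
Proof.
move=> un wn; case: eqP => [->|/eqP uw].
  by rewrite key_exp3 // expr0 -exprS key_exp2.
by rewrite (key_exp1 un wn uw) exprS subrr.
Qed.

Lemma key_diff2 (x : R) n (u w : nat) : (0 < u)%N -> (u < n)%N -> (w < n)%N ->
  x ^+ ((u + n - w) %% n) - x * x ^+ ((u.-1 + n - w) %% n)
  = if u == w then 1 - x ^+ n else 0.
Proof.
move=> u0 un wn; case: eqP => [E|/eqP uw].
  by subst u; rewrite key_exp3 // expr0 -exprS key_exp5.
by rewrite (key_exp4 u0 un wn uw) exprS subrr.
Qed.
End Real2.
Section Mx.
Variable R : realType.
Variable x : R.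
Variable n : nat.

Definition Cmx : 'M[R]_n := \matrix_(u, v) x ^+ ((u + n - v) %% n).
Definition Emx : 'M[R]_n :=
  \matrix_(u, v) ((u == v)%:R - x * ((u : nat) == v.+1)%:R).

Lemma sum_ind (F : 'I_n -> R) (w : 'I_n) : \sum_v (v == w)%:R * F v = F w.
Proof.
rewrite (bigD1 w) //= eqxx mul1r big1 ?addr0 // => v /negPf ->.
by rewrite mul0r.
Qed.

Lemma sum_ind_r (F : 'I_n -> R) (w : 'I_n) : \sum_v F v * (v == w)%:R = F w.
Proof. by rewrite -[RHS](sum_ind F w); apply: eq_bigr => v _; rewrite mulrC. Qed.

Lemma det_Emx : \det Emx = 1.
Proof.
rewrite det_trig; last first.
  apply/is_trig_mxP => i j lt; rewrite mxE.
  have -> : (i == j) = false by apply/negbTE; rewrite neq_ltn lt.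
  have -> : ((i : nat) == j.+1) = false by apply/negbTE; rewrite neq_ltn ltnS ltnW.
  by rewrite mulr0 subr0.
rewrite big1 // => i _; rewrite mxE eqxx.
have -> : ((i : nat) == i.+1) = false by apply/negbTE; rewrite neq_ltn ltnSn.
by rewrite mulr0 subr0.
Qed.

Lemma EC_entry (u w : 'I_n) : (Emx *m Cmx) u w =
  if (u : nat) == 0%N then x ^+ ((n - w) %% n)
  else (if u == w then 1 - x ^+ n else 0).
Proof.
rewrite mxE.
rewrite (eq_bigr (fun v => (v == u)%:R * Cmx v w - x * (((u : nat) == v.+1)%:R * Cmx v w)));
  last by move=> v _; rewrite mxE mulrBl eq_sym mulrA.
rewrite sumrB sum_ind -mulr_sumr.
case: eqP => [u0|un0].
  rewrite big1 ?mulr0 ?subr0; first by rewrite mxE u0 add0n.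
  by move=> v _; rewrite u0 /= mul0r.
have u0 : (0 < u)%N by rewrite lt0n; apply/eqP.
have ult : (u.-1 < n)%N by apply: leq_ltn_trans (leq_pred u) (ltn_ord u).
rewrite (eq_bigr (fun v => (v == Ordinal ult)%:R * Cmx v w)); last first.
  move=> v _; have -> : ((u : nat) == v.+1) = (v == Ordinal ult); last by [].
  apply/idP/idP => [/eqP E|/eqP ->].
    by apply/eqP; apply: ord_inj => /=; rewrite E.
  by rewrite /= prednK.
rewrite sum_ind !mxE /=.
have := key_diff2 x u0 (ltn_ord u) (ltn_ord w).
by rewrite -(inj_eq (@ord_inj _)) => ->.
Qed.

Lemma det_Cmx : (0 < n)%N -> \det Cmx = (1 - x ^+ n) ^+ n.-1.
Proof.
move=> n0.
have <- : \det (Emx *m Cmx) = \det Cmx by rewrite det_mulmx det_Emx mul1r.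
rewrite -det_tr det_trig; last first.
  apply/is_trig_mxP => i j lt; rewrite mxE EC_entry.
  have -> : ((j : nat) == 0%N) = false by apply/negbTE; rewrite -lt0n (leq_ltn_trans _ lt).
  by have -> : (j == i) = false by apply/negbTE; rewrite neq_ltn lt orbT.
move: Emx Cmx EC_entry; case: n n0 => // n' _ E C ECe.
rewrite big_ord_recl mxE ECe /= subn0 modnn expr0 mul1r.
rewrite (eq_bigr (fun _ => 1 - x ^+ n'.+1)); last first.
  by move=> i _; rewrite mxE ECe /= eqxx.
by rewrite prodr_const card_ord.
Qed.
End Mx.
Section Mx2.
Variable R : realType.
Variable x : R.
Variable n : nat.
Variables al be : {perm 'I_n}.

Definition Qp : 'M[R]_n := \matrix_(j, l) Cmx x n (al j) (be l).
Definition Fp : 'M[R]_n :=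
  \matrix_(l, k) ((be l == al k)%:R - x * ((be l : nat) == ((al k).+1 %% n)%N)%:R).

Lemma QF : Qp *m Fp = (1 - x ^+ n)%:M.
Proof.
apply/matrixP => j k; rewrite !mxE.
pose w' : 'I_n := Ordinal (ltn_pmod (al k).+1 (ord_gt0 k)).
pose G v := Cmx x n (al j) v * ((v == al k)%:R - x * ((v : nat) == ((al k).+1 %% n)%N)%:R).
transitivity (\sum_v G v).
  rewrite [RHS](reindex_inj (@perm_inj _ be)); apply: eq_bigr => l _.
  by rewrite /G !mxE.
rewrite /G (eq_bigr (fun v => Cmx x n (al j) v * (v == al k)%:R -
    x * (Cmx x n (al j) v * (v == w')%:R))); last first.
  by move=> v _; rewrite mulrBr mulrCA.
rewrite sumrB -mulr_sumr !sum_ind_r !mxE /=.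
rewrite key_diff // (inj_eq (@ord_inj n)) (inj_eq (@perm_inj _ al)).
by case: (j == k).
Qed.

Lemma det_Qp : \det Qp = (-1) ^+ al * (-1) ^+ be * \det (Cmx x n).
Proof.
have -> : Qp = row_perm al (col_perm be (Cmx x n)) by apply/matrixP => j l; rewrite !mxE.
rewrite row_permE col_permE !det_mulmx !det_perm odd_permV.
by rewrite -mulrA [\det _ * _]mulrC.
Qed.
End Mx2.
Section NT2.

Lemma dvdz_modE (d m : int) : (d %| m)%Z = ((m %% d)%Z == 0).
Proof. by apply/dvdz_mod0P/eqP. Qed.

Lemma legendre_congr (m1 m2 : int) (p : nat) : (m1 %% p = m2 %% p)%Z ->
  legendre m1 p = legendre m2 p.
Proof. by move=> E; rewrite /legendre !dvdz_modE E. Qed.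

Lemma jacobi_congr (m1 m2 : int) (n : nat) : (m1 %% n = m2 %% n)%Z ->
  jacobi m1 n = jacobi m2 n.
Proof.
move=> E; rewrite /jacobi; apply: eq_big_seq => p.
rewrite mem_primes => /and3P[_ _ pn]; congr (_ ^+ _); apply: legendre_congr.
apply/eqP; rewrite eqz_mod_dvd; apply: (dvdz_trans (n := n)) => //.
by rewrite -eqz_mod_dvd E.
Qed.

Lemma jacobi0 (m : int) n p : prime p -> (p %| n)%N -> (0 < n)%N -> (p %| m)%Z ->
  jacobi m n = 0.
Proof.
move=> pr pn n0 pm; apply/eqP; rewrite /jacobi prodf_seq_eq0; apply/hasP.
have pp : p \in primes n by rewrite mem_primes pr n0 pn.
exists p => //=; rewrite /legendre pm expf_eq0 eqxx andbT.
by rewrite logn_gt0.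
Qed.

Lemma not_coprimez_prime (b : int) n : (0 < n)%N -> ~~ coprimez b n ->
  exists2 p, prime p & (p %| n)%N /\ (p %| b)%Z.
Proof.
move=> n0 nc.
have gE : gcdz b n = (gcdn `|b|%N n)%:Z by [].
have g0 : (0 < gcdn `|b|%N n)%N by rewrite gcdn_gt0 n0 orbT.
have g1 : (1 < gcdn `|b|%N n)%N.
  by move: nc g0; rewrite /coprimez gE; case: (gcdn _ _) => [|[|]].
exists (pdiv (gcdn `|b|%N n)); first exact: pdiv_prime.
split.
  by apply: dvdn_trans (pdiv_dvd _) _; apply: dvdn_gcdr.
apply: (dvdz_trans (n := gcdz b n)); last exact: dvdz_gcdl.
by rewrite gE; exact: pdiv_dvd.
Qed.

Lemma modz_sub_congr (X Y : int) (n : int) :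
  (((X %% n)%Z - (Y %% n)%Z + n) %% n = (X - Y) %% n)%Z.
Proof.
by rewrite modzDr modzDml -modzDmr modzNm modzDmr.
Qed.
End NT2.
Unset Implicit Arguments.
Theorem proposition2p1 (R : realType) (n : nat) (a : int) (q : R) :
  odd n -> 0 < q -> q != 1 ->
  \det (Qmat n a q) = (jacobi (a * (a + 1)) n)%:~R * (1 - q^-1) ^+ n.-1 /\
  (coprimez (a * (a + 1)) n%:Z ->
     invmx (Qmat n a q) = (1 - q^-1)^-1 *: fmat n a q).
Proof.
move=> on q0 q1.
have n0 : (0 < n)%N by case: n on.
pose x := q `^ (- (n%:R)^-1).
have xn : x ^+ n = q^-1.
  rewrite /x -powR_mulrn ?powR_ge0 // -powRrM mulNr mulVf ?powR_inv1 ?ltW //.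
  by rewrite pnatr_eq0 -lt0n.
have Qe : forall j k : 'I_n, Qmat n a q j k =
    x ^+ `|((a * (j.+1)%:Z - (a + 1) * (k.+1)%:Z) %% n)%Z|%N.
  by move=> j k; rewrite mxE frac_pow.
have c1 : 1 - q^-1 != 0 by rewrite subr_eq0 eq_sym invr_eq1.
case cop: (coprimez (a * (a + 1)) n); last first.
  split; last by [].
  move: cop; rewrite coprimezMl => /negbT; rewrite negb_and => /orP[] nc.
  - have [p pr [pn pa]] := not_coprimez_prime n0 nc.
    rewrite (jacobi0 pr pn n0) ?mul0r; last by apply: dvdz_mulr.
    have p1 := prime_gt1 pr.
    have np0 : (0 < n %/ p)%N by rewrite divn_gt0 ?prime_gt0 // dvdn_leq.
    have nplt : (n %/ p < n)%N by rewrite ltn_Pdiv.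
    apply: (@determinant_alternate _ _ _ (Ordinal n0) (Ordinal nplt)).
      by rewrite -(inj_eq (@ord_inj _)) /= eq_sym -lt0n.
    move=> k; rewrite !Qe /=; congr (_ ^+ _); congr absz.
    case/dvdzP: pa => t ->.
    have nE : (n : int) = (n %/ p)%N%:Z * p by rewrite -PoszM divnK.
    set u := ((n %/ p)%N : int); set K := ((k.+1)%N : int).
    have -> : t * p * (n %/ p).+1%:Z - (t * p + 1) * K =
              t * n + (t * p * 1%:Z - (t * p + 1) * K).
      by rewrite nE intS /u; ring.
    by rewrite modzMDl.
  - have [p pr [pn pa]] := not_coprimez_prime n0 nc.
    rewrite (jacobi0 pr pn n0) ?mul0r; last by apply: dvdz_mull.
    have p1 := prime_gt1 pr.
    have np0 : (0 < n %/ p)%N by rewrite divn_gt0 ?prime_gt0 // dvdn_leq.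
    have nplt : (n %/ p < n)%N by rewrite ltn_Pdiv.
    rewrite -det_tr.
    apply: (@determinant_alternate _ _ _ (Ordinal n0) (Ordinal nplt)).
      by rewrite -(inj_eq (@ord_inj _)) /= eq_sym -lt0n.
    move=> j; rewrite !mxE !frac_pow //=; congr (_ ^+ _); congr absz.
    case/dvdzP: pa => t Ht.
    have aE : a = t * p - 1 by rewrite -Ht addrK.
    rewrite Ht aE.
    have nE : (n : int) = (n %/ p)%N%:Z * p by rewrite -PoszM divnK.
    set u := ((n %/ p)%N : int); set J := ((j.+1)%N : int).
    have -> : (t * p - 1) * J - t * p * 1%:Z =
              t * n + ((t * p - 1) * J - t * p * (n %/ p).+1%:Z).
      by rewrite nE intS /u; ring.
    by rewrite modzMDl.
move: (cop); rewrite coprimezMl => /andP[ca ca1].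
pose a' := `|(a %% n)%Z|%N.
have a'E : (a' : int) = (a %% n)%Z by rewrite modz_absE.
have a'1E : (a'.+1 : int) = (a %% n)%Z + 1 by rewrite -addn1 PoszD a'E.
have ca' : coprime a' n.
  have : coprimez (a %% n)%Z n by rewrite /coprimez gcdz_modl.
  by rewrite -a'E.
have ca1' : coprime a'.+1 n.
  have : coprimez ((a + 1) %% n)%Z n by rewrite /coprimez gcdz_modl.
  rewrite -modzDml -a'1E.
  by rewrite /coprimez gcdz_modl.
pose al := (shperm n * mperm n a')%g.
pose be := (shperm n * mperm n a'.+1)%g.
have alE : forall j : 'I_n, (al j : int) = ((a * (j.+1)%:Z) %% n)%Z.
  move=> j; rewrite permM mpermE // permE /= modnMmr -modz_nat PoszM a'E.
  by rewrite modzMml.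
have beE : forall j : 'I_n, (be j : int) = (((a + 1) * (j.+1)%:Z) %% n)%Z.
  move=> j; rewrite permM mpermE // permE /= modnMmr -modz_nat PoszM a'1E.
  by rewrite -modzMml modzDml modzMml.
have QE : Qmat n a q = Qp x al be.
  apply/matrixP => j k; rewrite Qe !mxE; congr (_ ^+ _).
  apply/eqP; rewrite -eqz_nat modz_absE // -modz_nat.
  rewrite -subzn; last by apply: leq_trans (ltnW (ltn_ord _)) (leq_addl _ _).
  rewrite PoszD alE beE addrAC modz_sub_congr.
  by [].
have FE : fmat n a q = Fp x al be.
  apply/matrixP => l k; rewrite !mxE.
  have e1 : (n%:Z %| (a + 1) * (l.+1)%:Z - a * (k.+1)%:Z)%Z = (be l == al k).
    by rewrite -eqz_mod_dvd -beE -alE eqz_nat.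
  have e2 : (n%:Z %| (a + 1) * (l.+1)%:Z - a * (k.+1)%:Z - 1)%Z =
            ((be l : nat) == ((al k).+1 %% n)%N).
    rewrite -addrA -opprD -eqz_mod_dvd -beE -modzDml -alE.
    have -> : (al k : int) + 1 = ((al k).+1 : nat) by rewrite -addn1 PoszD.
    by rewrite modz_nat eqz_nat.
  by rewrite e1 e2.
split.
  rewrite QE det_Qp det_Cmx // xn; congr (_ * _).
  have oal : odd_perm al = odd_perm (mperm n a') by rewrite odd_permM odd_shperm.
  have obe : odd_perm be = odd_perm (mperm n a'.+1) by rewrite odd_permM odd_shperm.
  rewrite oal obe -signr_addb.
  have -> : odd_perm (mperm n a') (+) odd_perm (mperm n a'.+1) =
            odd_perm (mperm n (a' * a'.+1)) by rewrite mpermM // odd_permM addbC.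
  rewrite (@jacobi_congr _ ((a' * a'.+1)%N)); last first.
    by rewrite PoszM a'E a'1E [RHS]modzMml -[RHS]modzMmr modzDml modzMmr.
  by rewrite zolotarev // ?coprimeMl ?ca' ?ca1' // rmorph_sign.
move=> _; rewrite QE FE.
have H := QF x al be; rewrite xn in H.
have H' : Qp x al be *m ((1 - q^-1)^-1 *: Fp x al be) = 1%:M.
  by rewrite -scalemxAr H scale_scalar_mx mulVf.
have [U _] := mulmx1_unit H'.
by rewrite -[LHS]mulmx1 -H' mulmxA mulVmx // mul1mx.
Qed.
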